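(* The meta-algorithm described in the context, with the commitment subroutine \textsc{CommitUnknown} (any parameter $\delta\in(0,1)$), guarantees \[ \sum_{\ell\in\mathcal L^+}R(\ell)\le 2N_{\textsc{F}}+2C. \]
   Context: Robust dynamic pricing: there are $T$ rounds and an unknown valuation $v^\star\in[0,1)$. At each round $t$ the seller posts a price $p_t\in[0,1]$. The true sale indicator is $y_t=\mathbbm 1\{p_t\le v^\star\}$; the seller observes $\sigma_t\in\{0,1\}$, and at most $C$ rounds are corrupted: $|\{t\in[T]:\sigma_t\neq y_t\}|\le C$. Meta-algorithm: let $D=\lceil\log_2 T\rceil$. Consider the complete binary tree of intervals of depth $D$ with root $[0,1)$, where each non-leaf node $[L,R)$ has children $[L,M)$ and $[M,R)$, $M=(L+R)/2$; the depth-$D$ nodes are the leaves, forming the set $\mathcal L$, and $\ell^\star$ is the unique leaf containing $v^\star$. $\mathcal L^+$ is the set of leaves lying above $\ell^\star$ (leaves $[L_\ell,R_\ell)$ with $L_\ell>v^\star$). The algorithm keeps a current node $I$, initially the root, and repeats until the horizon ends: if $I=[L,R)$ is not a leaf, it performs a safety check — post $L$ and observe $\sigma_L$, post $R$ and observe $\sigma_R$; the check fails if $\sigma_L=0$ or $\sigma_R=1$ (by convention the query at $L=0$ and the query at $R=1$ always count as passing). On failure $I$ becomes its parent; otherwise it posts $M$, observes $\sigma_M$, and $I$ becomes $[M,R)$ if $\sigma_M=1$ and $[L,M)$ if $\sigma_M=0$. If $I$ is a leaf, the commitment subroutine is run on $I$; if it returns FAIL, $I$ becomes its parent. \textsc{CommitUnknown}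 with parameter $\delta$: each leaf $\ell$ has a counter $s_\ell$, initialized to $0$ at the start of the horizon and never reset. On leaf $\ell=[L,R)$ it repeats the following two-round block: post $L$ and observe $\sigma_L$; if $\sigma_L=0$ return FAIL. Increase $s_\ell$ by $1$ and sample, independently, $B\sim\mathrm{Bernoulli}(\min\{4\ln(T/\delta)/s_\ell,1\})$. If $B=0$, post $L$ and observe $\sigma_L$, returning FAIL if $\sigma_L=0$; if $B=1$, post $R$ and observe $\sigma_R$, returning FAIL if $\sigma_R=1$. For a leaf $\ell$, $Q(\ell)$ is the set of rounds during which the commitment subroutine runs on $\ell$, and $R(\ell)=\sum_{t\in Q(\ell)}(v^\star-p_t\mathbbm 1\{p_t\le v^\star\})$. $N_{\textsc{F}}$ is the number of times the commitment subroutine returns FAIL on a leaf different from $\ell^\star$. *)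

(* Defs.v *)
From mathcomp Require Import all_boot all_order all_algebra.
From mathcomp Require Import all_classical all_reals exp.
Set Implicit Arguments. Unset Strict Implicit. Unset Printing Implicit Defensive.
Import Order.TTheory GRing.Theory Num.Theory.
Local Open Scope ring_scope.

(* Depth of the tree: D = ceil(log2 T) (up_log 2 T, which is 0 for T <= 1). *)
Definition depth (T : nat) : nat := up_log 2 T.

(* Nodes are pairs (d, k) denoting the dyadic interval [k/2^d, (k+1)/2^d). *)
(* Phases of the meta-algorithm at the current node:
   PL          : safety check, about to post L
   PR sL       : safety check, about to post R (sL = whether the L query passed)
   PM          : safety check passed, about to post M
   CFirst      : CommitUnknown, first round of a block (post L)
   CSecond b   : CommitUnknown, second round of a block with sampled B = b *)
Inductive phase := PL | PR of bool | PM | CFirst | CSecond of bool.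

Record state := St {
  sd : nat;
  sk : nat;
  sph : phase;
  scnt : nat -> nat       (* counters s_ell, indexed by leaf index *)
}.

Definition enter (D d k : nat) (s : nat -> nat) : state :=
  St d k (if d == D then CFirst else PL) s.

(* Move to the parent (the root is its own parent, only relevant when D = 0). *)
Definition to_parent (D : nat) (st : state) : state :=
  match sd st with
  | 0 => enter D 0 0 (scnt st)
  | d'.+1 => enter D d' ((sk st) %/ 2) (scnt st)
  end.

Definition price {R : realType} (st : state) : R :=
  let den : R := (2 ^ sd st)%:R in
  let k := sk st in
  match sph st with
  | PL | CFirst | CSecond false => k%:R / den
  | PR _ | CSecond true => k.+1%:R / den
  | PM => (k.*2.+1)%:R / (2 * den)
  end.

Definition commit_fails (st : state) (sg : bool) : bool :=
  match sph st with
  | CFirst => ~~ sg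
  | CSecond b => if b then sg else ~~ sg
  | _ => false
  end.

(* One round of the meta-algorithm with CommitUnknown.  [coin k s] is the
   realization of the Bernoulli variable B sampled on leaf k when its counter
   becomes s (each pair (k, s) is sampled at most once since counters are
   never reset). *)
Definition step (D : nat) (coin : nat -> nat -> bool) (st : state) (sg : bool)
  : state :=
  let d := sd st in let k := sk st in let s := scnt st in
  match sph st with
  | PL => St d k (PR ((k == 0)%N || sg)) s
  | PR okL => if okL && ((k.+1 == 2 ^ d)%N || ~~ sg) then St d k PM s
              else to_parent D st
  | PM => enter D d.+1 (if sg then k.*2.+1 else k.*2) s
  | CFirst =>
      if sg then
        let s' := fun j => if j == k then (s k).+1 else s j in
        St d k (CSecond (coin k (s' k))) s'
      else to_parent D st
  | CSecond b => if commit_fails st sg then to_parent D st else St d k CFirst s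
  end.

(* State at the beginning of round t (rounds are 0, ..., T-1), given the
   observed feedback sequence sigma and the coin realizations. *)
Fixpoint run (D : nat) (coin : nat -> nat -> bool) (sigma : nat -> bool)
  (t : nat) : state :=
  match t with
  | 0 => enter D 0 0 (fun _ => 0%N)
  | t'.+1 => step D coin (run D coin sigma t') (sigma t')
  end.

Definition in_commit (D k : nat) (st : state) : bool :=
  [&& sd st == D, sk st == k &
      match sph st with CFirst | CSecond _ => true | _ => false end].

Definition leaf_contains {R : realType} (D k : nat) (v : R) : bool :=
  (k%:R / (2 ^ D)%:R <= v) && (v < k.+1%:R / (2 ^ D)%:R).

(* Main.v *)
Require Import Defs.
From mathcomp Require Import all_boot all_order all_algebra.
From mathcomp Require Import all_classical all_reals exp.
From mathcomp Require Import zify.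
Set Implicit Arguments. Unset Strict Implicit. Unset Printing Implicit Defensive.
Import Order.TTheory GRing.Theory Num.Theory.
Local Open Scope ring_scope.

Definition iscommit (ph : phase) : bool :=
  match ph with CFirst | CSecond _ => true | _ => false end.
Definition issecond (ph : phase) : bool :=
  match ph with CSecond _ => true | _ => false end.

Definition Aab {R : realType} (D : nat) (v : R) (s : state) : bool :=
  [&& sd s == D, (sk s < 2 ^ D)%N, v < (sk s)%:R / (2 ^ D)%:R & iscommit (sph s)].
Definition Pab {R : realType} (D : nat) (v : R) (s : state) : bool :=
  [&& sd s == D, (sk s < 2 ^ D)%N, v < (sk s)%:R / (2 ^ D)%:R & issecond (sph s)].
Definition Fab {R : realType} (D : nat) (v : R) (s : state) (sg : bool) : bool :=
  in_commit D (sk s) s && ~~ leaf_contains D (sk s) v && commit_fails s sg.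
Definition Cab {R : realType} (v : R) (s : state) (sg : bool) : bool :=
  sg != (price s <= v).

Lemma price_gt (R : realType) D (v : R) s :
  sd s = D -> v < (sk s)%:R / (2 ^ D)%:R -> iscommit (sph s) -> v < price s.
Proof.
case: s => d k ph c /= -> Hv; rewrite /price /=.
case: ph => //= [b _]; case: b => //.
apply: (lt_le_trans Hv); apply: ler_wpM2r; first by rewrite invr_ge0 ler0n.
by rewrite ler_nat.
Qed.

Lemma to_parent_notP (R : realType) D (v : R) s : Pab D v (to_parent D s) = false.
Proof.
case: s => d k ph c; rewrite /to_parent /=; case: d => [|d] /=;
rewrite /Pab /enter /=; by case: ifP; rewrite !andbF.
Qed.

Lemma step_case (R : realType) D (v : R) coin s sg :
  (Aab D v s + Pab D v (step D coin s sg) <= Pab D v s + Fab D v s sg + 2 * Cab v s sg)%N.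
Proof.
have HF : Aab D v s -> v < price s /\ ~~ leaf_contains D (sk s) v /\ in_commit D (sk s) s.
  rewrite /Aab => /and4P [/eqP Hd Hk Hv Hc].
  split.
    exact: (price_gt Hd Hv Hc).
  split.
    by rewrite /leaf_contains negb_and -ltNge Hv.
  by rewrite /in_commit Hd !eqxx /=; case: (sph s) Hc => //.
case: s HF => d k ph c HF; case: ph HF => [|okL|||b] HF.
- by rewrite /Aab /Pab /= !andbF.
- rewrite /step /=; case: ifP => _; last by rewrite to_parent_notP /Aab /= !andbF.
  by rewrite /Aab /Pab /= !andbF.
- rewrite /step /= /enter /Aab /Pab /= !andbF; case: sg; case: (_.+1 == D); rewrite /= ?andbF; lia.
- rewrite /step /=; case: sg.
  + rewrite /Cab /Pab /Aab /=.
    case: (boolP [&& d == D, (k < 2 ^ D)%N & v < k%:R / (2 ^ D)%:R]) => H.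
    * have HA : Aab D v (St d k CFirst c) by rewrite /Aab /= andbT.
      have [Hp _] := HF HA.
      rewrite !andbT !andbF H leNgt Hp /=; lia.
    * rewrite !andbT !andbF (negbTE H); lia.
  + rewrite to_parent_notP addn0 /Fab /=.
    case: (boolP (Aab D v (St d k CFirst c))) => H //.
    have [_ [Hl Hi]] := HF H; rewrite Hl Hi /=; lia.
- rewrite /step /=; case: ifP => _; first rewrite to_parent_notP.
  + rewrite /Aab /Pab /=; case: (_ && _); lia.
  + rewrite /Aab /Pab /= andbF; case: (_ && _); lia.
Qed.

Lemma count_ind (R : realType) D (v : R) coin sigma n :
  (\sum_(t < n) Aab D v (run D coin sigma t) + Pab D v (run D coin sigma n) <=
   \sum_(t < n) Fab D v (run D coin sigma t) (sigma t) + 2 * \sum_(t < n) Cab v (run D coin sigma t) (sigma t))%N.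
Proof.
set st := run D coin sigma; elim: n => [|n IH].
  by rewrite !big_ord0 /st /= /Pab /enter /=; case: ifP; rewrite !andbF.
rewrite !big_ord_recr /=.
have := step_case D v coin (st n) (sigma n).
have -> : st n.+1 = step D coin (st n) (sigma n) by [].
move: IH.
move: (\sum_(i < n) Aab D v (st i))%N (\sum_(i < n) Fab D v (st i) (sigma i))%N
  (\sum_(i < n) Cab v (st i) (sigma i))%N => a f cc.
move: (nat_of_bool (Aab D v (st n))) (nat_of_bool (Pab D v (step D coin (st n) (sigma n))))
  (nat_of_bool (Pab D v (st n))) (nat_of_bool (Fab D v (st n) (sigma n)))
  (nat_of_bool (Cab v (st n) (sigma n))) => x1 x2 x3 x4 x5.
lia.
Qed.

Lemma per_t (R : realType) D (v : R) s :
  0 <= v < 1 ->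
  \sum_(k < 2 ^ D | v < k%:R / (2 ^ D)%:R)
     (if in_commit D k s then v - (if price s <= v then price s else 0) else 0)
  <= (Aab D v s : nat)%:R.
Proof.
case/andP => Hv0 Hv1.
case: (boolP (Aab D v s)) => HA.
- have /and4P [/eqP Hd Hk Hvk Hc] := HA.
  rewrite (bigD1 (Ordinal Hk)) //= big1.
  + rewrite /in_commit Hd !eqxx /=.
    have Hc' : (match sph s with CFirst | CSecond _ => true | _ => false end) = true
      by case: (sph s) Hc => //.
    rewrite Hc' (leNgt (price s)) (price_gt Hd Hvk Hc) /= subr0 addr0; exact: ltW.
  + move=> i /andP [_ Hi]; rewrite /in_commit; case: ifP => //.
    case/and3P => _ /eqP Hik _; exfalso; move: Hi; apply/negP; rewrite negbK.
    by apply/eqP/val_inj.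
- rewrite big1 //= => i Hi; rewrite /in_commit; case: ifP => //.
  case/and3P => Hd /eqP Hik Hc; exfalso; move/negP: HA; apply.
  by rewrite /Aab Hd Hik ltn_ord Hi /=; case: (sph s) Hc => //.
Qed.

Theorem lemma5p3 (R : realType) (T C : nat) (delta vstar : R)
  (coin : nat -> nat -> bool) (sigma : nat -> bool) :
  0 < delta < 1 ->
  0 <= vstar < 1 ->
  (* every realized coin lies in the support of Bernoulli(min{4 ln(T/delta)/s, 1}) *)
  (forall k s : nat, (0 < s)%N -> coin k s = false ->
     4 * ln (T%:R / delta) / s%:R < 1) ->
  (* at most C corrupted rounds *)
  (\sum_(t < T)
     (sigma t != (@price R (run (depth T) coin sigma t) <= vstar)%R : nat) <= C)%N ->
  let D := depth T in
  let st t := run D coin sigma t in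
  let p t : R := price (st t) in
  (* R(ell) summed over the leaves ell above ell* *)
  \sum_(k < 2 ^ D | vstar < k%:R / (2 ^ D)%:R)
     \sum_(t < T | in_commit D k (st t)) (vstar - (if p t <= vstar then p t else 0))
  <= 2 * (\sum_(t < T)
            ((in_commit D (sk (st t)) (st t)
              && ~~ leaf_contains D (sk (st t)) vstar
              && commit_fails (st t) (sigma t)) : nat))%:R
     + 2 * C%:R.
Proof.
move=> _ Hv _ HC; cbv beta zeta.
set D := depth T. set st := run D coin sigma.
have Hcnt := count_ind D vstar coin sigma T.
rewrite -/st in Hcnt.
have Hle : (\sum_(t < T) Aab D vstar (st t) <=
   2 * \sum_(t < T) Fab D vstar (st t) (sigma t) + 2 * C)%N.
  have : (\sum_(t < T) Cab vstar (st t) (sigma t) <= C)%N by exact: HC.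
  lia.
apply: (le_trans (y := (\sum_(t < T) Aab D vstar (st t) : nat)%:R)).
  under eq_bigr do rewrite big_mkcond /=.
  rewrite exchange_big /= natr_sum; apply: ler_sum => t _.
  exact: per_t.
have -> : 2 * (\sum_(t < T) Fab D vstar (st t) (sigma t) : nat)%:R + 2 * C%:R
   = (2 * \sum_(t < T) Fab D vstar (st t) (sigma t) + 2 * C)%N%:R :> R.
  by rewrite natrD !natrM.
by rewrite ler_nat.
Qed.
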